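(* Let $N\ge 2$ vehicles, with positions $x_1(t),\dots,x_N(t)$, travel without overtaking on a ring road of length $L>0$; vehicle $N$ is the platoon leader, and vehicle $1$ is the vehicle directly ahead of the leader around the ring, at distance $x_1+L-x_N$. Let $a>0$, and let $V$ be an optimal velocity function, differentiable at $h=L/N$ with $V'(h)>0$. Suppose the dynamics are $$\ddot{x}_i(t)=a\left[V\!\left(\frac{x_N(t)-x_i(t)}{N-i}\right)-\dot{x}_i(t)\right],\qquad i=1,\dots,N-1,$$ $$\ddot{x}_N(t)=a\left[V\big(x_1(t)+L-x_N(t)\big)-\dot{x}_N(t)\right].$$ Then this system is linearly stable about the uniform-flow equilibrium $e_i(t)=hi+V(h)t$ for every $a>0$. No condition on $a$ beyond positivity is needed.
   Context: Write $x_i(t)=e_i(t)+y_i(t)$ and linearize the system in the small perturbations $y_i$. The system is called linearly stable if every characteristic root $\lambda$ of this linearized system, i.e. every $\lambda$ admitting a solution of the form $y_i(t)=\xi_i e^{\lambda t}$ with $(\xi_1,\dots,\xi_N)\neq 0$, satisfies $\operatorname{Re}\lambda<0$. The single exception is the root $\lambda=0$, which corresponds to uniform translations $y_1=\dots=y_N=\text{const}$, i.e. perturbations that leave all spacings unchanged. *)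

(* Defs.v *)
From Stdlib Require Import Reals Lra Lia.
From Coquelicot Require Import Coquelicot.

Open Scope R_scope.

Definition spacing (N : nat) (L : R) : R := L / INR N.

(* Characteristic equation of the system linearized about the uniform flow
   e_i(t) = h i + V(h) t, h = L/N, with b = V'(h):
     y_i'' = a [ b (y_N - y_i)/(N-i) - y_i' ]   (1 <= i <= N-1)
     y_N'' = a [ b (y_1 - y_N)       - y_N' ]
   (note e_1 + L - e_N = h since L = N h).  Substituting y_i(t) = xi_i e^{lam t}
   gives the algebraic system below.  Indices run over 1..N. *)
Definition char_root (N : nat) (L a : R) (V : R -> R) (lam : C) : Prop :=
  let b := Derive V (spacing N L) in
  exists xi : nat -> C,
    (exists i : nat, (1 <= i <= N)%nat /\ xi i <> 0%C) /\
    (forall i : nat, (1 <= i <= N - 1)%nat ->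
       (lam * lam * xi i =
        RtoC a * (RtoC b * (xi N - xi i) / RtoC (INR (N - i)) - lam * xi i))%C) /\
    (lam * lam * xi N =
     RtoC a * (RtoC b * (xi 1%nat - xi N) - lam * xi N))%C.

(* Linear stability: every characteristic root has negative real part,
   except the root 0 (uniform translations). *)
Definition linearly_stable (N : nat) (L a : R) (V : R -> R) : Prop :=
  forall lam : C, char_root N L a V lam -> lam = 0%C \/ Re lam < 0.

(* Main.v *)
Require Import Defs.
From Stdlib Require Import Reals Lra Lia Classical.
From Coquelicot Require Import Coquelicot.

Open Scope R_scope.

Lemma quad (l : C) (a k : R) : 0 < a -> 0 <= k ->
  (l * l + RtoC a * l + RtoC k = 0)%C -> l = 0%C \/ Re l < 0.
Proof.
  intros Ha Hk H. destruct l as [x y].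
  assert (H1 := f_equal fst H). assert (H2 := f_equal snd H).
  simpl in H1, H2. unfold Re; simpl.
  destruct (Rlt_or_le x 0) as [Hx|Hx]; [now right|].
  assert (Hy : y = 0) by nra. subst y.
  assert (x = 0) by nra. subst x. now left.
Qed.

Lemma RtoC_nz (x : R) : x <> 0 -> RtoC x <> 0%C.
Proof. intros Hx H. injection H. auto. Qed.

Lemma zprod (u v : C) : (u * v = 0)%C -> v <> 0%C -> u = 0%C.
Proof.
  intros H Hv. destruct (Req_dec 0 0) as [_|]; [|easy].
  destruct (classic (u = 0%C)) as [?|Hu]; [assumption|]. exfalso. exact (Cmult_neq_0 u v Hu Hv H).
Qed.

Lemma Cmult_eq_reg_l (c x y : C) : (c * x = c * y)%C -> c <> 0%C -> x = y.
Proof.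
  intros H Hc. transitivity (/ c * (c * x))%C; [field; assumption|].
  rewrite H. field; assumption.
Qed.

Lemma Cinv_neq_0_loc (c : C) : c <> 0%C -> (/ c)%C <> 0%C.
Proof.
  intros Hc H. apply C1_nz. rewrite <- (Cinv_r c Hc). rewrite H. ring.
Qed.

Theorem theorem3p2 (N : nat) (L a : R) (V : R -> R) :
  (2 <= N)%nat -> 0 < L -> 0 < a ->
  ex_derive V (spacing N L) -> 0 < Derive V (spacing N L) ->
  linearly_stable N L a V.
Proof.
  intros HN HL Ha _ Hb lam Hroot.
  unfold char_root in Hroot.
  set (b := Derive V (spacing N L)) in *.
  destruct Hroot as [xi [[i [Hi Hxi]] [Hrow HNe]]].
  assert (HA : RtoC a <> 0%C) by (apply RtoC_nz; lra).
  assert (HB : RtoC b <> 0%C) by (apply RtoC_nz; lra).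
  destruct (classic (xi N = 0%C)) as [HxN|HxN].
  -
    assert (Hx1 : xi 1%nat = 0%C).
    { rewrite HxN in HNe.
      apply (zprod _ (RtoC a * RtoC b)).
      + transitivity (RtoC a * (RtoC b * (xi 1%nat - 0) - lam * 0))%C; [ring|].
        rewrite <- HNe. ring.
      + now apply Cmult_neq_0. }
    assert (Hi2 : (1 <= i <= N - 1)%nat).
    { destruct (Nat.eq_dec i N) as [->|]; [contradiction|].
      destruct (Nat.eq_dec i 1) as [->|]; [contradiction|]. lia. }
    set (mi := INR (N - i)).
    assert (Hmi : 0 < mi) by (apply lt_0_INR; lia).
    assert (HmiC : RtoC mi <> 0%C) by (apply RtoC_nz; lra).
    specialize (Hrow i Hi2). rewrite HxN in Hrow. fold mi in Hrow.
    apply (quad lam a (a * b / mi)); [lra| apply Rlt_le; apply Rdiv_lt_0_compat; nra |].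
    rewrite RtoC_div by lra. rewrite RtoC_mult.
    apply (zprod _ (xi i)); [|assumption].
    replace ((lam * lam + RtoC a * lam + RtoC a * RtoC b / RtoC mi) * xi i)%C
      with (lam * lam * xi i - RtoC a * (RtoC b * (0 - xi i) / RtoC mi - lam * xi i))%C
      by (field; assumption).
    rewrite Hrow. ring.
  - set (m := INR (N - 1)).
    assert (Hm : 0 < m) by (apply lt_0_INR; lia).
    assert (HmC : RtoC m <> 0%C) by (apply RtoC_nz; lra).
    assert (H1 := Hrow 1%nat ltac:(lia)). fold m in H1.
    set (p := (lam * lam + RtoC a * lam)%C).
    set (AB := (RtoC a * RtoC b)%C).
    assert (e1 : ((p * RtoC m + AB) * xi 1%nat = AB * xi N)%C).
    { unfold p, AB.
      apply (Cmult_eq_reg_l (/ RtoC m)). 2: apply Cinv_neq_0_loc; assumption.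
      transitivity (lam * lam * xi 1%nat + RtoC a * lam * xi 1%nat
                    + RtoC a * RtoC b * xi 1%nat / RtoC m)%C; [field; assumption|].
      rewrite H1. field; assumption. }
    assert (e2 : ((p + AB) * xi N = AB * xi 1%nat)%C).
    { unfold p, AB.
      transitivity (lam * lam * xi N + RtoC a * lam * xi N + RtoC a * RtoC b * xi N)%C;
        [ring|]. rewrite HNe. ring. }
    assert (Hk : (p * (p * RtoC m + AB * (1 + RtoC m)) * xi N = 0)%C).
    { transitivity ((p * RtoC m + AB) * ((p + AB) * xi N) - AB * AB * xi N)%C; [ring|].
      rewrite e2.
      transitivity (AB * ((p * RtoC m + AB) * xi 1%nat) - AB * AB * xi N)%C; [ring|].
      rewrite e1. ring. }
    apply zprod in Hk; [|assumption].
    destruct (classic (p = 0%C)) as [Hp|Hp].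
    + apply (quad lam a 0); [lra|lra|]. transitivity p; [unfold p; ring | exact Hp].
    + rewrite Cmult_comm in Hk. apply zprod in Hk; [|assumption].
      apply (quad lam a (a * b * (1 + m) / m)); [lra| apply Rlt_le; apply Rdiv_lt_0_compat; [apply Rmult_lt_0_compat; [apply Rmult_lt_0_compat|]|]; lra |].
      rewrite RtoC_div by lra. rewrite !RtoC_mult, RtoC_plus.
      apply (Cmult_eq_reg_l (RtoC m)); [|assumption].
      transitivity (p * RtoC m + AB * (1 + RtoC m))%C.
      * unfold p, AB. field. assumption.
      * rewrite Hk. ring.
Qed.
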